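(* There is no element of $\mathcal{D}'$ strictly between $\sqrt3$ and $\frac{7+\sqrt{13}}{6}$.
   Context: For an infinite word $w$ with infinitely many palindromic prefixes (the empty word counting as one), let $(n_i)_{i\ge1}$ be the increasing sequence of their lengths and $\delta(w)=\limsup n_{i+1}/n_i$. Characteristic Sturmian word: for positive integers $s_1,s_2,\dots$ and letters $a\ne b$, let $\sigma_0=a$, $\sigma_1=a^{s_1-1}b$, $\sigma_n=\sigma_{n-1}^{s_n}\sigma_{n-2}$ ($n\ge2$); the limit of the $\sigma_n$ is the characteristic Sturmian word of slope $[0;s_1,s_2,\dots]$. $\mathcal{D}'$ is the set of values $\delta(w)$ where $w$ is either a periodic word with a palindromic period (i.e. $w=uuu\cdots$ with $u$ a nonempty palindrome) or a characteristic Sturmian word. *)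

(* Defs.v *)
From HB Require Import structures.
From mathcomp Require Import all_boot all_order all_algebra.
From mathcomp Require Import all_classical all_reals all_analysis.
Set Implicit Arguments. Unset Strict Implicit. Unset Printing Implicit Defensive.
Import Order.TTheory GRing.Theory Num.Theory.
Local Open Scope ring_scope.

Definition word (T : Type) := nat -> T.

Section Words.
Variable T : eqType.

Definition pal_prefix (w : word T) (n : nat) : bool :=
  all (fun i => w i == w (n.-1 - i)%N) (iota 0 n).

Definition inf_pal (w : word T) : Prop :=
  forall m : nat, exists n : nat, (m <= n)%N /\ pal_prefix w n.

(* smallest palindromic-prefix length > m (0 if none; irrelevant under inf_pal) *)
Definition next_pal (w : word T) (m : nat) : nat :=
  match boolp.pselect (exists n, (m < n)%N && pal_prefix w n) with
  | left h => ex_minn h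
  | right _ => 0%N
  end.

(* pal_len w i = n_{i+1}: the increasing enumeration of palindromic-prefix
   lengths, starting with n_1 = 0 (the empty prefix). *)
Definition pal_len (w : word T) (i : nat) : nat := iter i (next_pal w) 0%N.

(* delta(w) = limsup_i n_{i+1}/n_i, as an extended real (may be +oo).
   The term with n_1 = 0 in the denominator is a single term and does not
   affect the limsup. *)
Definition delta (R : realType) (w : word T) : \bar R :=
  limn_esup (fun i => (((pal_len w i.+1)%:R / (pal_len w i)%:R : R))%:E).

Definition periodic_pal (w : word T) : Prop :=
  exists u : seq T, [/\ u != [::], rev u = u &
     forall i, w i = nth (w i) u (i %% size u)].

(* sigma_n of the standard sequence with directive sequence s_1, s_2, ...
   (s 0 unused). *)
Fixpoint sigma_pair (s : nat -> nat) (a b : T) (n : nat) : seq T * seq T :=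
  (* returns (sigma_n, sigma_{n+1}) *)
  match n with
  | 0 => ([:: a], rcons (nseq (s 1%N).-1 a) b)
  | n'.+1 => let p := sigma_pair s a b n' in
             (p.2, flatten (nseq (s n'.+2) p.2) ++ p.1)
  end.

Definition sigma (s : nat -> nat) (a b : T) (n : nat) : seq T :=
  (sigma_pair s a b n).1.

Definition char_sturmian (s : nat -> nat) (a b : T) (w : word T) : Prop :=
  forall i : nat, exists N : nat, forall n : nat, (N <= n)%N ->
    (i < size (sigma s a b n))%N /\ w i = nth (w i) (sigma s a b n) i.

Definition is_char_sturmian (w : word T) : Prop :=
  exists (s : nat -> nat) (a b : T),
    [/\ forall i, (0 < s i.+1)%N, a != b & char_sturmian s a b w].

End Words.

Definition Dprime (R : realType) : set (\bar R) :=
  [set x | exists (T : eqType) (w : word T),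
     [/\ inf_pal w, periodic_pal w \/ is_char_sturmian w & x = delta R w]].
Arguments Dprime R : clear implicits.
Arguments delta {T} R w.

(* Main.v *)
Require Import Defs.
From HB Require Import structures.
From mathcomp Require Import all_boot all_order all_algebra.
From mathcomp Require Import all_classical all_reals all_analysis.
From mathcomp Require Import zify ring lra.
Import Order.TTheory GRing.Theory Num.Theory.
Local Open Scope ring_scope.

Section Lims.
Variable R : realType.
Local Open Scope ereal_scope.
Local Open Scope classical_set_scope.

Lemma esup_le_ev (u : (\bar R)^nat) (c : \bar R) N :
  (forall n, (N <= n)%N -> u n <= c) -> limn_esup u <= c.
Proof.
move=> H; rewrite /limn_esup limf_esupE.
apply: ge_ereal_inf; exists (ereal_sup (u @` [set n | (N <= n)%N])).
  by exists [set n | (N <= n)%N] => //; exists N.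
by apply: ge_ereal_sup => _ [n /= Hn <-]; exact: H.
Qed.

Lemma esup_ge_io (u : (\bar R)^nat) (c : \bar R) :
  (forall N, exists2 n, (N <= n)%N & c <= u n) -> c <= limn_esup u.
Proof.
move=> H; rewrite /limn_esup limf_esupE.
apply: le_ereal_inf_tmp => _ [V [N _ HV] <-].
have [n Nn cn] := H N.
apply: le_ereal_sup_tmp; exists (u n) => //; exists n => //; exact: HV.
Qed.

Lemma esup_le_eps (u : (\bar R)^nat) (c : R) :
  (forall e : R, (0 < e)%R -> exists N, forall n, (N <= n)%N -> u n <= (c + e)%:E) ->
  limn_esup u <= c%:E.
Proof.
move=> H; apply/lee_addgt0Pr => e e0.
have [N HN] := H e e0; rewrite -EFinD; exact: esup_le_ev HN.
Qed.
End Lims.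


Section PalW.
Variable T : eqType.
Variable w : word T.
Local Open Scope nat_scope.

Lemma palP n : reflect (forall i, i < n -> w i = w (n.-1 - i)) (pal_prefix w n).
Proof.
apply: (iffP allP) => [H i Hi|H i].
  by apply/eqP; apply: H; rewrite mem_iota.
by rewrite mem_iota add0n => /andP[_ Hi]; apply/eqP; apply: H.
Qed.

Lemma pal0 : pal_prefix w 0.
Proof. by []. Qed.

Lemma pal_shift l d : pal_prefix w l -> pal_prefix w (l + d) -> 0 < d -> d <= l ->
  pal_prefix w (l - d) /\ w (l - d) = w l.
Proof.
move=> /palP Pl /palP Pm d0 dl.
have per i : i < l -> w (i + d) = w i.
  move=> il; rewrite Pm; last by lia.
  have -> : (l + d).-1 - (i + d) = l.-1 - i by lia.
  by rewrite -Pl.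
split; last first.
  by have := per (l - d); rewrite subnK //; move=> ->//; lia.
apply/palP => i il.
rewrite -(per ((l - d).-1 - i)); last by lia.
have -> : (l - d).-1 - i + d = l.-1 - i by lia.
by rewrite -Pl //; lia.
Qed.

Lemma pal_gap l q : pal_prefix w l -> 0 < q -> q <= l.+1 ->
  (forall j, l < j + q -> j < l -> pal_prefix w j -> w j != w l) ->
  forall m, l < m -> m < l + q -> ~~ pal_prefix w m.
Proof.
move=> Pl q0 ql H m lm mq; apply/negP => Pm.
have := @pal_shift l (m - l) Pl; rewrite subnKC; last by lia.
move=> /(_ Pm) []; [lia|lia|] => Pj Ej.
have HH := H (l - (m - l)); rewrite Ej eqxx in HH; have : false by apply: HH Pj; lia.
done.
Qed.


Hypothesis Hinf : inf_pal w.

Lemma next_palP m : [/\ m < next_pal w m, pal_prefix w (next_pal w m) &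
  forall j, m < j -> j < next_pal w m -> ~~ pal_prefix w j].
Proof.
rewrite /next_pal; case: boolp.pselect => [h|h]; last first.
  exfalso; apply: h; have [n [mn Pn]] := Hinf m.+1; exists n; by rewrite mn.
case: ex_minnP => n /andP[mn Pn] Hmin; split => // j mj jn.
apply/negP => Pj; have := Hmin j; rewrite mj Pj => /(_ isT); lia.
Qed.

Lemma pal_lenS i : pal_len w i.+1 = next_pal w (pal_len w i).
Proof. by []. Qed.

Lemma pal_len_pal i : pal_prefix w (pal_len w i).
Proof. by case: i => [|i] //; rewrite pal_lenS; case: (next_palP (pal_len w i)). Qed.

Lemma pal_len_lt i : pal_len w i < pal_len w i.+1.
Proof. by rewrite pal_lenS; case: (next_palP (pal_len w i)). Qed.

Lemma pal_len_ge i : i <= pal_len w i.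
Proof. elim: i => // i IH; have := pal_len_lt i; lia. Qed.

Lemma pal_len_mono i j : i <= j -> pal_len w i <= pal_len w j.
Proof.
elim: j => [|j IH]; first by rewrite leqn0 => /eqP->.
rewrite leq_eqVlt => /orP[/eqP->//|]; rewrite ltnS => /IH; have := pal_len_lt j; lia.
Qed.

Lemma bracket l : exists i, pal_len w i <= l < pal_len w i.+1.
Proof.
elim: l => [|l [i /andP[H1 H2]]]; first by exists 0; rewrite /= (pal_len_lt 0).
have [E|E] := boolP (l.+1 < pal_len w i.+1).
  by exists i; rewrite E andbT; lia.
exists i.+1; have := pal_len_lt i.+1; lia.
Qed.

Lemma consec l l' : pal_prefix w l -> pal_prefix w l' -> l < l' ->
  (forall j, l < j -> j < l' -> ~~ pal_prefix w j) ->
  exists i, pal_len w i = l /\ pal_len w i.+1 = l'.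
Proof.
move=> Pl Pl' ll' gap; have [i /andP[H1 H2]] := bracket l.
have Ei : pal_len w i = l.
  apply/eqP; rewrite eqn_leq H1 /=; rewrite leqNgt; apply/negP => H.
  move: H2; rewrite pal_lenS; case: (next_palP (pal_len w i)) => _ _ Hg.
  by move=> H2; have := Hg l H H2; rewrite Pl.
exists i; split => //; rewrite pal_lenS Ei.
case: (next_palP l) => H3 H4 H5.
apply/eqP; rewrite eqn_leq; apply/andP; split.
  rewrite leqNgt; apply/negP => H; by have := H5 l' ll' H; rewrite Pl'.
rewrite leqNgt; apply/negP => H; by have := gap _ H3 H; rewrite H4.
Qed.


Lemma next_pal_eq l l' : pal_prefix w l' -> l < l' ->
  (forall j, l < j -> j < l' -> ~~ pal_prefix w j) -> next_pal w l = l'.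
Proof.
move=> Pl' ll' gap; case: (next_palP l) => H3 H4 H5.
apply/eqP; rewrite eqn_leq; apply/andP; split.
  rewrite leqNgt; apply/negP => H; by have := H5 l' ll' H; rewrite Pl'.
rewrite leqNgt; apply/negP => H; by have := gap _ H3 H; rewrite H4.
Qed.

End PalW.

Set Implicit Arguments. Unset Strict Implicit. Unset Printing Implicit Defensive.

Section SeqAlg.
Variable T : eqType.
Local Open Scope nat_scope.
Implicit Types u v z : seq T.

Definition pw u k := flatten (nseq k u).

Lemma pwS u k : pw u k.+1 = u ++ pw u k. Proof. by []. Qed.
Lemma pw0 u : pw u 0 = [::]. Proof. by []. Qed.
Lemma pwSr u k : pw u k.+1 = pw u k ++ u.
Proof. elim: k => [|k IH]; first by rewrite pwS pw0 cats0. by rewrite [LHS]pwS [in LHS]IH catA -pwS. Qed.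
Lemma pwD u k l : pw u (k + l) = pw u k ++ pw u l.
Proof. by elim: k => // k IH; rewrite addSn !pwS IH catA. Qed.
Lemma size_pw u k : size (pw u k) = k * size u.
Proof. by elim: k => // k IH; rewrite pwS size_cat IH mulSn. Qed.
Lemma rev_pw u k : rev (pw u k) = pw (rev u) k.
Proof. by elim: k => // k IH; rewrite pwS rev_cat IH -pwSr. Qed.

Lemma catsI s u v : s ++ u = s ++ v -> u = v.
Proof. by elim: s => // x s IH [] /IH. Qed.
Lemma catIs s u v : u ++ s = v ++ s -> u = v.
Proof. by move/(congr1 rev); rewrite !rev_cat => /catsI /(congr1 rev); rewrite !revK. Qed.

Lemma G1 u z : rev z = z -> u ++ z = z ++ rev u ->
  forall k, pw u k ++ z = z ++ pw (rev u) k.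
Proof.
move=> Hz Hu; elim=> [|k IH]; first by rewrite cats0.
by rewrite pwS -catA IH catA Hu -catA -pwS.
Qed.

Lemma G1r u z k : rev z = z -> u ++ z = z ++ rev u -> rev (pw u k ++ z) = pw u k ++ z.
Proof. by move=> Hz Hu; rewrite [in LHS](G1 Hz Hu) rev_cat rev_pw revK Hz. Qed.

Lemma G2 u v z x y : rev z = z -> u ++ v = z ++ [:: x; y] -> v ++ u = z ++ [:: y; x] ->
  v ++ z = z ++ rev v -> u ++ z = z ++ rev u.
Proof.
move=> Hz Huv Hvu Hv.
have E1 : rev u ++ rev v = [:: x; y] ++ z.
  by rewrite -rev_cat Hvu rev_cat Hz.
have : (z ++ rev u) ++ rev v = (u ++ z) ++ rev v.
  by rewrite -catA E1 catA -Huv -catA Hv catA.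
by move/catIs.
Qed.
End SeqAlg.

Section Sturm.
Variable T : eqType.
Variables (s : nat -> nat) (a b : T).
Hypothesis spos : forall i, (0 < s i.+1)%N.
Hypothesis ab : a != b.
Local Open Scope nat_scope.

Definition sg n := sigma s a b n.
Lemma sg0 : sg 0 = [:: a]. Proof. by []. Qed.
Lemma sg1 : sg 1 = rcons (nseq (s 1).-1 a) b. Proof. by []. Qed.
Lemma sgSS n : sg n.+2 = pw (sg n.+1) (s n.+2) ++ sg n. Proof. by []. Qed.

Definition U m := sg m.+1.
Definition V m := sg m.
Definition S m := s m.+2.
Fixpoint Z m := match m with 0 => nseq (s 1).-1 a | m'.+1 => pw (U m') (S m') ++ Z m' end.
Definition xl m := if odd m then a else b.
Definition yl m := if odd m then b else a.

Lemma US m : U m.+1 = pw (U m) (S m) ++ V m. Proof. by []. Qed.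
Lemma VS m : V m.+1 = U m. Proof. by []. Qed.
Lemma S_gt0 m : 0 < S m. Proof. exact: spos. Qed.

Lemma swap m : U m ++ V m = Z m ++ [:: xl m; yl m] /\ V m ++ U m = Z m ++ [:: yl m; xl m].
Proof.
elim: m => [|m [IH1 IH2]].
  rewrite /U /V /= sg1 sg0 /xl /yl /=; split; first by rewrite cat_rcons.
  have := spos 0; case: (s 1) => // k _ /=.
  by elim: k => //= k ->.
rewrite US VS; split; [rewrite -catA IH2 | rewrite catA -pwS pwSr -catA IH1];
  by rewrite -catA /xl /yl /=; case: (odd m).
Qed.

Lemma palZ m : rev (Z m) = Z m /\ U m ++ Z m = Z m ++ rev (U m).
Proof.
elim: m => [|m [IH1 IH2]].
  rewrite /= rev_nseq /U sg1; split => //.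
  by rewrite rev_rcons rev_nseq cat_rcons.
have HZ : rev (Z m.+1) = Z m.+1 by rewrite /= G1r.
split => //.
have [H1 H2] := swap m.+1.
apply: (G2 HZ H1 H2).
rewrite VS /= catA -pwS -catA -IH2 catA -pwSr.
by [].
Qed.

Definition q m := size (U m).
Definition pp m := size (V m).
Definition Lm m k := k * q m + size (Z m).

Lemma sizeZ m : size (Z m) + 2 = q m + pp m.
Proof. by have [H _] := swap m; rewrite /q /pp -size_cat H size_cat addnC. Qed.
Lemma qS m : q m.+1 = S m * q m + pp m.
Proof. by rewrite /q US size_cat size_pw. Qed.
Lemma ppS m : pp m.+1 = q m. Proof. by []. Qed.
Lemma sizeZS m : size (Z m.+1) = S m * q m + size (Z m).
Proof. by rewrite /= size_cat size_pw. Qed.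
Lemma q_gt0 m : 0 < q m.
Proof.
elim: m => [|m IH]; first by rewrite /q /U sg1 size_rcons.
rewrite qS; have := S_gt0 m; nia.
Qed.
Lemma pp_gt0 m : 0 < pp m.
Proof. by case: m => // m; rewrite ppS q_gt0. Qed.
Lemma LmS m k : Lm m k.+1 = Lm m k + q m.
Proof. rewrite /Lm mulSn; lia. Qed.
Lemma LmSm m : Lm m (S m) = Lm m.+1 0.
Proof. by rewrite /Lm sizeZS. Qed.

Variable w : word T.
Hypothesis Hw : char_sturmian s a b w.

Definition wpre (u : seq T) := forall i, i < size u -> w i = nth a u i.

Lemma wpre_cat u v : wpre (u ++ v) -> wpre u.
Proof.
move=> H i Hi; rewrite H; last by rewrite size_cat; lia.
by rewrite nth_cat Hi.
Qed.

Lemma wpre_pal u : wpre u -> rev u = u -> pal_prefix w (size u).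
Proof.
move=> Hu Hr; apply/palP => i Hi.
rewrite !Hu; [|lia|lia].
rewrite -[in LHS]Hr nth_rev //; congr nth; lia.
Qed.

Lemma U_pref m : exists t, U m.+1 = U m ++ t.
Proof.
rewrite US; have := S_gt0 m; case: (S m) => // k _.
by exists (pw (U m) k ++ V m); rewrite pwS catA.
Qed.

Lemma U_chain m n : m <= n -> exists t, U n = U m ++ t.
Proof.
elim: n => [|n IH]; first by rewrite leqn0 => /eqP->; exists [::]; rewrite cats0.
rewrite leq_eqVlt => /orP[/eqP->|]; first by exists [::]; rewrite cats0.
rewrite ltnS => /IH [t Ht]; have [t' Ht'] := U_pref n.
by exists (t ++ t'); rewrite Ht' Ht catA.
Qed.

Lemma wpreU m : wpre (U m).
Proof.
move=> i Hi; have [N HN] := Hw i.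
have [Hs Hn] := HN (maxn N m.+1) (leq_maxl _ _).
have : m <= (maxn N m.+1).-1 by rewrite -ltnS prednK; [exact: leq_maxr|lia].
move=> /U_chain [t Ht]; move: Hs Hn.
rewrite -[sigma _ _ _ (maxn N m.+1)]/(sg (maxn N m.+1)) -(prednK (_ : 0 < maxn N m.+1)); last by lia.
rewrite -[sg (maxn N m.+1).-1.+1]/(U _) Ht => Hs ->.
by rewrite (set_nth_default a) // nth_cat Hi.
Qed.

Definition Wm m := pw (U m) (S m) ++ Z m ++ [:: yl m; xl m].

Lemma wpreW m : wpre (Wm m).
Proof.
have -> : Wm m = U m.+1 ++ U m.
  by rewrite US -catA (swap m).2.
have [t Ht] : exists t, U m.+2 = U m.+1 ++ U m ++ t.
  rewrite [U m.+2]US; have := S_gt0 m.+1; case: (S m.+1) => // k _.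
  case: k => [|k]; first by exists [::]; rewrite pwS pw0 !cats0 VS.
  have [t Ht] := U_pref m.
  exists (t ++ pw (U m.+1) k ++ V m.+1).
  rewrite (pwS (U m.+1) k.+1) (pwS (U m.+1) k) {2}Ht -!catA.
  by [].
by have := @wpreU m.+2; rewrite Ht catA; apply: wpre_cat.
Qed.

Lemma Wm_split m k : k <= S m ->
  Wm m = (pw (U m) k ++ Z m) ++ (pw (rev (U m)) (S m - k) ++ [:: yl m; xl m]).
Proof.
move=> kS; have [H1 H2] := palZ m.
rewrite /Wm -(subnKC kS) pwD -!catA (catA (pw (U m) (S m - k))) (G1 H1 H2).
by rewrite subnKC // -!catA.
Qed.

Lemma size_pwZ m k : size (pw (U m) k ++ Z m) = Lm m k.
Proof. by rewrite size_cat size_pw. Qed.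

Lemma pal_L m k : k <= S m -> pal_prefix w (Lm m k).
Proof.
move=> kS; rewrite -size_pwZ; apply: wpre_pal; last by have [H1 H2] := palZ m; exact: G1r.
by have := @wpreW m; rewrite (Wm_split kS); apply: wpre_cat.
Qed.

Lemma wW m i : i < size (Wm m) -> w i = nth a (Wm m) i.
Proof. exact: wpreW. Qed.

Lemma letter_L m k : k < S m -> w (Lm m k) = xl m.
Proof.
move=> kS; have kS' := ltnW kS.
have Hs : Lm m k < size (Wm m).
  rewrite (Wm_split kS') size_cat size_pwZ size_cat /=; lia.
rewrite (@wW m) // (Wm_split kS') nth_cat size_pwZ ltnn subnn.
have -> : S m - k = (S m - k).-1.+1 by lia.
rewrite pwS -catA nth_cat size_rev; have -> /= : 0 < size (U m) by exact: q_gt0.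
have E : rev (U m) ++ rev (V m) = [:: xl m; yl m] ++ Z m.
  by rewrite -rev_cat (swap m).2 rev_cat (palZ m).1.
have := congr1 (nth a ^~ 0) E; rewrite nth_cat size_rev.
by have -> /= : 0 < size (U m) by exact: q_gt0.
Qed.

Lemma letter_LS m : w (Lm m (S m)) = yl m.
Proof.
have Hs : Lm m (S m) < size (Wm m).
  rewrite (Wm_split (leqnn _)) size_cat size_pwZ size_cat /=; lia.
by rewrite (@wW m) // (Wm_split (leqnn _)) nth_cat size_pwZ ltnn subnn subnn.
Qed.


Definition Cm m k := forall j, q m < j + 2 -> j <= Lm m k -> pal_prefix w j ->
  exists2 i, i <= k & j = Lm m i.
Definition Hm m k := forall j, Lm m k < j + q m -> j < Lm m k -> pal_prefix w j ->
  w j != w (Lm m k).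

Lemma Lm_ge m k : q m <= (Lm m k).+1.
Proof. have := sizeZ m; have := pp_gt0 m; rewrite /Lm; nia. Qed.

Lemma gap_of m k : k < S m -> Hm m k ->
  forall j, Lm m k < j -> j < Lm m k.+1 -> ~~ pal_prefix w j.
Proof.
move=> kS H j H1 H2; apply: (@pal_gap T w (Lm m k) (q m) (pal_L (ltnW kS))) => //.
- exact: q_gt0.
- exact: Lm_ge.
- by rewrite -LmS.
Qed.

Lemma stepk m k : k < S m -> Cm m k -> Hm m k -> Cm m k.+1.
Proof.
move=> kS C H j j1 j2 Pj.
have [jk|jk] := leqP j (Lm m k).
  by have [i ik ->] := C j j1 jk Pj; exists i => //; lia.
have [E|E] := boolP (j == Lm m k.+1); first by exists k.+1 => //; apply/eqP.
have j3 : j < Lm m k.+1 by rewrite ltn_neqAle E j2.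
by have := gap_of kS H jk j3; rewrite Pj.
Qed.

Lemma Lm_mono m i k : i <= k -> Lm m i <= Lm m k.
Proof. by move=> ik; rewrite /Lm leq_add2r leq_mul2r ik orbT. Qed.

Lemma Hk m k : Cm m k.+1 -> Hm m k.+1.
Proof.
move=> C j j1 j2 Pj; exfalso.
have Lq := LmS m k; have Lg := Lm_ge m k.
have [i ik Ej] : exists2 i, i <= k.+1 & j = Lm m i by apply: C => //; lia.
have [/eqP Ei|Ei] := boolP (i == k.+1); first by move: j2; rewrite Ej Ei ltnn.
have := @Lm_mono m i k (ltac:(lia)); lia.
Qed.



Lemma H0S m : Cm m (S m) -> Hm m.+1 0.
Proof.
move=> C j j1 j2 Pj.
have E1 := LmSm m; have E2 := qS m; have E3 := sizeZ m.
have [i iS Ej] : exists2 i, i <= S m & j = Lm m i.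
  have F : Lm m (S m) = S m * q m + size (Z m) by [].
  by apply: C => //; move: j1 j2; rewrite -E1 E2 F; lia.
have iS' : i < S m.
  rewrite ltn_neqAle iS andbT; apply/negP => /eqP Ei; move: j2; rewrite Ej Ei E1; lia.
rewrite Ej -E1 letter_LS letter_L // /xl /yl; case: (odd m) => //; by rewrite eq_sym.
Qed.

Lemma C0S m : Cm m (S m) -> Cm m.+1 0.
Proof.
move=> C j j1 j2 Pj.
have E1 := LmSm m; have E2 := qS m; have E3 := sizeZ m.
have [i iS Ej] : exists2 i, i <= S m & j = Lm m i.
  have F : q m <= S m * q m by rewrite leq_pmull // S_gt0.
  by apply: C => //; move: j1 j2; rewrite -E1 E2; lia.
exists 0 => //; have [/eqP Ei|iS'] := boolP (i == S m); first by rewrite Ej Ei.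
exfalso; have iS2 : i < S m by rewrite ltn_neqAle iS' iS.
have F : i.+1 * q m <= S m * q m by rewrite leq_mul2r iS2 orbT.
rewrite mulSn in F; move: j1; rewrite Ej E2 /Lm; lia.
Qed.

Lemma base0 : Cm 0 0 /\ Hm 0 0.
Proof.
have HU := @wpreU 0; rewrite /U sg1 in HU.
have sz : size (Z 0) = (s 1).-1 by rewrite /= size_nseq.
have q0 : q 0 = s 1 by rewrite /q /U sg1 size_rcons size_nseq; have := spos 0; lia.
split.
  move=> j j1 j2 Pj; exists 0 => //; move: j1 j2; rewrite /Lm q0 sz /=; lia.
move=> j j1 j2 Pj; rewrite /Lm mul0n add0n sz in j2 *.
rewrite !HU ?size_rcons ?size_nseq; [|lia|lia].
rewrite !nth_rcons !size_nseq j2 ltnn eqxx nth_nseq j2; exact: ab.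
Qed.

Lemma inner m : Cm m 0 -> Hm m 0 -> forall k, k <= S m -> Cm m k /\ (k < S m -> Hm m k).
Proof.
move=> C0 H0; elim=> [|k IH] kS; first by split.
have [C H] := IH (ltnW kS).
have C' := stepk kS C (H kS).
by split => // _; exact: Hk.
Qed.

Lemma allm m : Cm m 0 /\ Hm m 0.
Proof.
elim: m => [|m [C H]]; first exact: base0.
have [C' _] := inner C H (leqnn (S m)).
by split; [exact: C0S | exact: H0S].
Qed.

Lemma gapL m k : k < S m ->
  forall j, Lm m k < j -> j < Lm m k.+1 -> ~~ pal_prefix w j.
Proof.
move=> kS; have [C H] := allm m; have [_ H'] := inner C H (ltnW kS).
exact: gap_of kS (H' kS).
Qed.

End Sturm.


Section Bridge.
Variable T : eqType.
Variables (s : nat -> nat) (a b : T).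
Hypothesis spos : forall i, (0 < s i.+1)%N.
Hypothesis ab : a != b.
Variable w : word T.
Hypothesis Hw : char_sturmian s a b w.
Hypothesis Hinf : inf_pal w.

Local Notation L := (Lm s a b).
Local Notation qq := (q s a b).
Local Notation SS := (S s).

Lemma L_lt m : (L m 0 < L m.+1 0)%N.
Proof.
rewrite -LmSm; have := @Lm_mono _ s a b m 1 (SS m) (S_gt0 spos m).
rewrite LmS //; have := q_gt0 spos ab m; lia.
Qed.

Lemma L_ge m : (m <= L m 0)%N.
Proof. elim: m => // m IH; have := L_lt m; lia. Qed.

Lemma L_pos m : (0 < m)%N -> (0 < L m 0)%N.
Proof. case: m => // m _; have := L_lt m; lia. Qed.

Lemma locate_in m l k : (k <= SS m)%N -> (L m 0 <= l < L m k)%N ->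
  exists2 k', (k' < k)%N & (L m k' <= l < L m k'.+1)%N.
Proof.
elim: k => [|k IH] kS; first by lia.
move=> /andP[H1 H2]; have [H3|H3] := leqP (L m k) l.
  by exists k => //; rewrite H3 H2.
have [k' k'k Hk'] := IH (ltnW kS) (ltac:(by rewrite H1 H3)).
by exists k' => //; lia.
Qed.

Lemma locate M l : (L M 0 <= l)%N ->
  exists m k, [/\ (M <= m)%N, (k < SS m)%N & (L m k <= l < L m k.+1)%N].
Proof.
move=> Hl.
suff H : forall n l, (L M 0 <= l < L (M + n) 0)%N ->
  exists m k, [/\ (M <= m)%N, (k < SS m)%N & (L m k <= l < L m k.+1)%N].
  apply: (H l.+1); rewrite Hl /=; have := L_ge (M + l.+1); lia.
elim=> [|n IH] l' Hl'; first by rewrite addn0 in Hl'; lia.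
have [H1|H1] := ltnP l' (L (M + n) 0).
  by apply: IH; move: Hl' => /andP[-> _].
have Hb : (L (M + n) 0 <= l' < L (M + n) (SS (M + n)))%N.
  by rewrite LmSm H1 -addnS; move: Hl' => /andP[_ ->].
have [k kS Hk] := locate_in (leqnn _) Hb.
by exists (M + n), k; split => //; lia.
Qed.

Variable R : realType.

Definition rat_seq (i : nat) : R := (pal_len w i.+1)%:R / (pal_len w i)%:R.

Lemma ratio_eq (l d : nat) : (0 < l)%N -> (l + d)%:R / l%:R = 1 + d%:R / l%:R :> R.
Proof. move=> l0; rewrite natrD mulrDl divff // pnatr_eq0; lia. Qed.

Lemma sturm_up (c : R) M :
  (forall m, (M <= m)%N -> 1 + (qq m)%:R / (L m 0)%:R <= c) ->
  (delta R w <= c%:E)%E.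
Proof.
move=> HM; apply: (@esup_le_ev R _ _ (L (maxn M 1) 0)) => i Hi.
have Hi' : (L (maxn M 1) 0 <= pal_len w i)%N := leq_trans Hi (@pal_len_ge T w Hinf i).
have [m [k [Mm kS /andP[H1 H2]]]] := locate Hi'.
have Ei : pal_len w i = L m k.
  apply/eqP; rewrite eqn_leq H1 andbT leqNgt; apply/negP => H.
  by have := gapL spos ab Hw kS H H2; rewrite (@pal_len_pal T w Hinf i).
have Ei1 : pal_len w i.+1 = L m k.+1.
  rewrite pal_lenS // Ei; apply: (@next_pal_eq T w Hinf) => //; first exact: pal_L.
    by rewrite LmS //; have := q_gt0 spos ab m; lia.
  exact: gapL.
have L0 : (0 < L m 0)%N by apply: L_pos; lia.
have Lk : (L m 0 <= L m k)%N by apply: Lm_mono.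
rewrite lee_fin /rat_seq Ei Ei1 LmS // ratio_eq; last by lia.
apply: le_trans (HM m (ltac:(lia))); rewrite lerD2l ler_pM2l ?ltr0n ?q_gt0 //.
rewrite lef_pV2 ?posrE ?ltr0n ?ler_nat //; lia.
Qed.

Lemma sturm_lo (c : R) :
  (forall M, exists2 m, (M <= m)%N & c <= 1 + (qq m)%:R / (L m 0)%:R) ->
  (c%:E <= delta R w)%E.
Proof.
move=> HM; apply: esup_ge_io => N.
have [m Mm Hc] := HM (maxn (pal_len w N).+1 1).
have P0 := pal_L spos ab Hw (leq0n (SS m)).
have P1 := pal_L spos ab Hw (S_gt0 spos m).
have Lq : L m 1 = (L m 0 + qq m)%N by rewrite LmS.
have qpos := q_gt0 spos ab m.
have [i [E0 E1]] := @consec T w Hinf _ _ P0 P1 (ltac:(lia)) (gapL spos ab Hw (S_gt0 spos m)).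
exists i.
  rewrite leqNgt; apply/negP => iN; have := @pal_len_mono T w Hinf _ _ (ltnW iN).
  have := L_ge m; lia.
have L0 : (0 < L m 0)%N by apply: L_pos; lia.
by rewrite lee_fin /rat_seq E0 E1 Lq ratio_eq.
Qed.

End Bridge.


Lemma sqrt3_ge (R : realType) : 3 / 2 <= Num.sqrt (3 : R).
Proof.
have h1 := @sqrtr_ge0 R 3; have h2 := @sqr_sqrtr R 3 (ltac:(lra)).
rewrite expr2 in h2; nra.
Qed.

Section Periodic.
Variable T : eqType.
Variable w : word T.
Variable u : seq T.
Hypothesis u0 : u != [::].
Hypothesis ur : rev u = u.
Hypothesis Hu : forall i, w i = nth (w i) u (i %% size u).
Hypothesis Hinf : inf_pal w.

Lemma pal_mult k : pal_prefix w (k * size u).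
Proof.
set p := size u; have p0 : (0 < p)%N by rewrite lt0n size_eq0.
apply/palP => i Hi.
rewrite Hu [in RHS]Hu.
have Hr : (i %% p < p)%N by rewrite ltn_mod.
set Q := (i %/ p)%N; set r := (i %% p)%N.
have Ei : i = (Q * p + r)%N by rewrite /Q /r -divn_eq.
have Qk : (Q < k)%N.
  rewrite ltnNge; apply/negP => kQ; have : (k * p <= Q * p)%N by rewrite leq_mul2r kQ orbT.
  lia.
have E : ((k * p).-1 - i = (k - Q - 1) * p + (p.-1 - r))%N.
  rewrite Ei; have -> : k = (k - Q - 1 + Q + 1)%N by lia.
  rewrite !mulnDl; lia.
rewrite E modnMDl modn_small; last by lia.
rewrite -[in RHS]ur nth_rev; last by rewrite -/p; lia.
rewrite -/p (_ : (p - (p.-1 - r).+1 = r)%N); last by lia.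
by apply: set_nth_default.
Qed.

Variable R : realType.

Lemma periodic_delta : (delta R w <= (Num.sqrt (3 : R))%:E)%E.
Proof.
set p := size u; have p0 : (0 < p)%N by rewrite lt0n size_eq0.
apply: (@esup_le_ev R _ _ (2 * p)) => i Hi.
have Hl : (2 * p <= pal_len w i)%N := leq_trans Hi (@pal_len_ge T w Hinf i).
set l := pal_len w i in Hl *.
have Hn : (pal_len w i.+1 <= l + p)%N.
  rewrite pal_lenS -/l; case: (@next_palP T w Hinf l) => H1 H2 H3.
  set K := ((l %/ p).+1 * p)%N.
  have K1 : (l < K)%N by rewrite /K ltn_ceil.
  have K2 : (K <= l + p)%N by rewrite /K mulSn (divn_eq l p) addnC; have := ltn_pmod l p0; nia.
  rewrite leqNgt; apply/negP => H; have := H3 K K1 (ltac:(lia)).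
  by rewrite pal_mult.
rewrite lee_fin; apply: le_trans (sqrt3_ge R).
have l0 : (0 < l)%N by lia.
rewrite ler_pdivrMr ?ltr0n //.
have : ((2 * pal_len w i.+1)%:R <= (3 * l)%:R :> R) by rewrite ler_nat; lia.
rewrite !natrM; lra.
Qed.
End Periodic.


Section NT.
Variable R : realType.
Variables (S q p : nat -> nat).
Hypothesis S1 : forall m, (0 < S m)%N.
Hypothesis q1 : forall m, (0 < q m)%N.
Hypothesis p1 : forall m, (0 < p m)%N.
Hypothesis qS : forall m, q m.+1 = (S m * q m + p m)%N.
Hypothesis pS : forall m, p m.+1 = q m.

Definition r m : R := (p m)%:R / (q m)%:R.

Lemma qR m : 0 < (q m)%:R :> R. Proof. by rewrite ltr0n. Qed.
Lemma pR m : 0 < (p m)%:R :> R. Proof. by rewrite ltr0n. Qed.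

Lemma r_ge0 m : 0 <= r m.
Proof. by rewrite /r divr_ge0 // ler0n. Qed.

Lemma rS m : r m.+1 = 1 / ((S m)%:R + r m).
Proof.
rewrite /r pS qS natrD natrM; have := qR m; have := pR m => hp hq.
have hS : 0 < (S m)%:R :> R by rewrite ltr0n.
have h1 : (q m)%:R != 0 :> R by rewrite lt0r_neq0.
have h2 : (S m)%:R + (p m)%:R / (q m)%:R != 0 :> R.
  by rewrite lt0r_neq0 // addr_gt0 // divr_gt0.
have h3 : (S m)%:R * (q m)%:R + (p m)%:R != 0 :> R.
  by rewrite lt0r_neq0 // addr_gt0 // mulr_gt0.
by field; rewrite h1 h3.
Qed.

Lemma r_le1 m : r m.+1 <= 1.
Proof.
rewrite /r pS qS ler_pdivrMr ?ltr0n ?addn_gt0 ?p1 ?orbT // mul1r ler_nat.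
have := S1 m; nia.
Qed.


Definition s3 : R := Num.sqrt 3.
Definition s13 : R := Num.sqrt 13.
Definition al : R := (s3 - 1) / 2.
Definition be : R := (s13 - 3) / 2.

Lemma s3F : 0 <= s3 /\ s3 * s3 = 3.
Proof. by split; [exact: sqrtr_ge0 | rewrite -expr2 sqr_sqrtr //; lra]. Qed.
Lemma s13F : 0 <= s13 /\ s13 * s13 = 13.
Proof. by split; [exact: sqrtr_ge0 | rewrite -expr2 sqr_sqrtr //; lra]. Qed.

Lemma s3B : 17/10 < s3 < 7/4.
Proof. have [h1 h2] := s3F; apply/andP; split; nra. Qed.
Lemma s13B : 36/10 < s13 < 361/100.
Proof. have [h1 h2] := s13F; apply/andP; split; nra. Qed.

Lemma alE : 2 * al * al + 2 * al = 1.
Proof. have [_ h] := s3F; rewrite /al; nra. Qed.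
Lemma beE : be * be + 3 * be = 1.
Proof. have [_ h] := s13F; rewrite /be; nra. Qed.
Lemma alB : 35/100 < al < 38/100.
Proof. have /andP[h1 h2] := s3B; rewrite /al; apply/andP; split; lra. Qed.
Lemma beB : 3/10 < be < 31/100.
Proof. have /andP[h1 h2] := s13B; rewrite /be; apply/andP; split; lra. Qed.

Lemma low_one m : (3 <= q m + p m)%N -> r m <= be ->
  (7 + s13) / 6 <= 1 + (q m)%:R / ((q m + p m - 2)%N)%:R.
Proof.
move=> H3 Hr; have hq := qR m; have hp := pR m.
rewrite /r ler_pdivrMr // in Hr.
have hD : ((q m + p m - 2)%N)%:R = (q m)%:R + (p m)%:R - 2 :> R.
  by rewrite natrB ?natrD //; lia.
have h3 : (3 <= (q m)%:R + (p m)%:R :> R) by rewrite -natrD (ler_nat _ 3).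
rewrite hD -lerBlDl ler_pdivlMr; last by lra.
have [h0 h13] := s13F.
have : (1 + s13) / 6 * ((p m)%:R - be * (q m)%:R) <= 0.
  by rewrite mulr_ge0_le0 //; lra.
rewrite /be; nra.
Qed.

Lemma S_le2 m : be < r m -> be < r m.+1 -> (S m <= 2)%N.
Proof.
move=> h1 h2; rewrite leqNgt; apply/negP => HS.
have HS' : 3 <= (S m)%:R :> R by rewrite (ler_nat _ 3).
rewrite rS in h2; have h0 := r_ge0 m; have hb := beB; have he := beE.
have hpos : 0 < (S m)%:R + r m by lra.
rewrite ltr_pdivlMr // in h2.
have : be * (3 + be) < be * ((S m)%:R + r m) by rewrite ltr_pM2l; lra.
nra.
Qed.


Lemma step2 m t : (S m <= 2)%N -> (S m.+1 <= 2)%N -> 0 <= t -> al - r m <= t ->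
  al - r m.+2 <= t / 2.
Proof.
move=> Sm Sm1 t0 Ht; have hb := alB; have he := alE.
have r0 := r_ge0 m; have r1 := r_ge0 m.+1; have r1le := r_le1 m.
have [E1|E1] : S m.+1 = 1%N \/ S m.+1 = 2%N by have := S1 m.+1; lia.
  have : 1 / 2 <= r m.+2.
    rewrite rS E1 ler_pdivlMr; last by lra.
    by lra.
  lra.
have [E0|E0] : S m = 2%N \/ S m = 1%N by have := S1 m; lia.
  have h1 : r m.+1 <= 1 / 2.
    rewrite rS E0 ler_pdivrMr; last by lra.
    by lra.
  have : 2 / 5 <= r m.+2.
    rewrite rS E1 ler_pdivlMr; last by lra.
    by lra.
  lra.
have Er : r m.+2 = (1 + r m) / (3 + 2 * r m).
  rewrite rS rS E1 E0 /=; field.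
  by apply/andP; split; apply: lt0r_neq0; lra.
rewrite Er; set D := 3 + 2 * r m; set y := (1 + r m) / D.
have D3 : 3 <= D by rewrite /D; lra.
have hy : y * D = 1 + r m by rewrite /y divfK //; apply: lt0r_neq0; lra.
have key : (3 + 2 * al) * (al * D - (1 + r m)) = al - r m by rewrite /D; nra.
have hX : al * D - (1 + r m) <= t / 3.
  have : (3 + 2 * al) * (al * D - (1 + r m)) <= t by rewrite key.
  nra.
have : (al - y) * D <= t / 2 * D.
  rewrite mulrBl hy; nra.
by rewrite ler_pM2r //; lra.
Qed.


Lemma decay M : (forall m, (M <= m)%N -> (S m <= 2)%N) ->
  forall k m, (M + 2 * k <= m)%N -> al - r m <= 1 / (k.+1)%:R.
Proof.
move=> HM; elim=> [|k IH] m Hm.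
  have h0 := r_ge0 m; have /andP[h1 h2] := alB; rewrite divr1; lra.
have [m' Em] : exists m', m = m'.+2 by exists m.-2; lia.
subst m.
have Hm' : (M + 2 * k <= m')%N by lia.
have hm1 : (M <= m')%N by lia.
have hm2 : (M <= m'.+1)%N by lia.
have t0 : 0 <= 1 / (k.+1)%:R :> R by rewrite divr_ge0 // ler0n.
have h := step2 (HM _ hm1) (HM _ hm2) t0 (IH m' Hm').
apply: le_trans h _.
rewrite -mulrA -invfM ler_pdivrMr ?mulr_gt0 ?ltr0n // mul1r.
rewrite -natrM mulrC ler_pdivlMr ?ltr0n // mul1r ler_nat; lia.
Qed.

Lemma q_ge m : (m < q m)%N.
Proof. elim: m => [|m IH]; first exact: q1. rewrite qS; have := S1 m; have := p1 m; nia. Qed.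

Lemma up_one M : (forall m, (M <= m)%N -> (S m <= 2)%N) ->
  forall e : R, 0 < e -> e <= 1 -> exists M', forall m, (M' <= m)%N ->
  1 + (q m)%:R / ((q m + p m - 2)%N)%:R <= s3 + e.
Proof.
move=> HM e e0 e1.
have [n Hn] : exists n : nat, 8 / e < n%:R.
  have h8 : 0 <= 8 / e by rewrite divr_ge0 //; lra.
  by exists (Num.truncn (8 / e)).+1; case/andP: (truncn_itv h8).
have n0 : 0 < n%:R :> R by apply: lt_trans Hn; rewrite divr_gt0 //; lra.
exists (M + 2 * n + n + 1)%N => m Hm.
have Ht := decay HM (ltac:(lia) : (M + 2 * n <= m)%N).
set t := 1 / (n.+1)%:R in Ht.
have ht : t <= e / 8.
  have hne : 8 < n%:R * e by rewrite -ltr_pdivrMr.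
  have hn1 : (n.+1)%:R = n%:R + 1 :> R by rewrite -natr1.
  rewrite /t ler_pdivrMr ?ltr0n // hn1; nra.
have t0 : 0 <= t by rewrite /t divr_ge0 // ler0n.
have qm := q_ge m; have hq := qR m; have hp := pR m.
set x := (q m)%:R in hq *; set y := (p m)%:R in hp *.
have hx : 8 / e <= x.
  apply: le_trans (ltW Hn) _; rewrite ler_nat; lia.
have hx2 : 2 <= e / 4 * x.
  move: hx; rewrite ler_pdivrMr // => hx; lra.
have hy : (al - t) * x <= y.
  have : al - t <= r m by lra.
  by rewrite /r ler_pdivlMr.
have hpq : (3 <= q m + p m)%N.
  have Em : m = m.-1.+1 by lia.
  rewrite Em qS pS; have := S1 m.-1; have := q1 m.-1; have := p1 m.-1; nia.
have hD : ((q m + p m - 2)%N)%:R = x + y - 2 :> R.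
  by rewrite natrB ?natrD //; lia.
rewrite hD.
have h3 : 3 <= x + y by rewrite /x /y -natrD (ler_nat _ 3).
have hA : x * (1 + al - 3 * e / 8) <= x + y - 2.
  have : t * x <= e / 8 * x by rewrite ler_pM2r.
  lra.
have /andP[hal1 hal2] := alB; have hae := alE.
have hB : 1 <= (2 * al + e) * (1 + al - 3 * e / 8) by nra.
have hs3 : s3 - 1 = 2 * al by rewrite /al; lra.
have hD2 : 0 < x + y - 2 by lra.
suff : x / (x + y - 2) <= 2 * al + e by lra.
rewrite ler_pdivrMr //.
apply: le_trans (_ : (2 * al + e) * (x * (1 + al - 3 * e / 8)) <= _).
  rewrite mulrA (mulrC (2 * al + e)) -mulrA; nra.
by rewrite ler_pM2l //; lra.
Qed.


Lemma dichotomy :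
  (forall M, exists2 m, (M <= m)%N &
     (7 + s13) / 6 <= 1 + (q m)%:R / ((q m + p m - 2)%N)%:R) \/
  (forall e : R, 0 < e -> e <= 1 -> exists M', forall m, (M' <= m)%N ->
     1 + (q m)%:R / ((q m + p m - 2)%N)%:R <= s3 + e).
Proof.
have [P|nP] := boolp.pselect (forall M, exists2 m, (M <= m)%N & r m <= be).
  left => M; have [m Mm Hm] := P (maxn M 1).
  have m1 : (1 <= m)%N := leq_trans (leq_maxr _ _) Mm.
  exists m; first exact: leq_trans (leq_maxl _ _) Mm.
  apply: low_one => //.
  have Em : m = m.-1.+1 by lia.
  rewrite Em qS pS; have := S1 m.-1; have := q1 m.-1; have := p1 m.-1; nia.
right; move: nP => /boolp.existsNP [M HM].
have HM' : forall m, (M <= m)%N -> be < r m.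
  move=> m Mm; rewrite ltNge; apply/negP => H; apply: HM; by exists m.
apply: (@up_one M) => m Mm; apply: S_le2; apply: HM'; lia.
Qed.

End NT.

Unset Implicit Arguments. Set Strict Implicit.
Theorem proposition7p7 (R : realType) :
  ~ (exists x : \bar R, Dprime R x /\
       ((Num.sqrt (3 : R))%:E < x < ((7 + Num.sqrt (13 : R)) / 6)%:E)%E).
Proof.
case=> x [[T [w [Hinf Hc ->]]] /andP[H1 H2]].
case: Hc => [[u [u0 ur Hu]]|[s [a [b [spos ab Hw]]]]].
  have := periodic_delta u0 ur Hu Hinf R.
  by rewrite leNgt H1.
have HL m : Lm s a b m 0 = (q s a b m + pp s a b m - 2)%N.
  by rewrite /Lm mul0n add0n -(sizeZ a b spos m) addnK.
have [Hlo|Hup] := dichotomy R (S_gt0 spos) (q_gt0 spos ab) (pp_gt0 spos ab)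
  (qS s a b) (ppS s a b).
  have : (((7 + Num.sqrt 13) / 6)%:E <= delta R w)%E.
    apply: (sturm_lo spos ab Hw Hinf) => M; have [m Mm Hm] := Hlo M.
    by exists m => //; rewrite HL; exact: Hm.
  by rewrite leNgt H2.
have : (delta R w <= (Num.sqrt 3)%:E)%E.
  apply/lee_addgt0Pr => e e0.
  have [e1|e1] := leP e 1.
    have [M HM] := Hup e e0 e1; rewrite -EFinD.
    by apply: (@sturm_up _ _ _ _ spos ab _ Hw Hinf R _ M) => m Mm; rewrite HL; exact: HM.
  have [M HM] := Hup 1 ltr01 (lexx 1).
  apply: le_trans (_ : _ <= (Num.sqrt 3 + 1)%:E)%E _.
    by apply: (@sturm_up _ _ _ _ spos ab _ Hw Hinf R _ M) => m Mm; rewrite HL; exact: HM.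
  by rewrite -EFinD lee_fin lerD2l ltW.
by rewrite leNgt H1.
Qed.
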